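(* Fix $0<\epsilon<2$. (1) If $2\le p_1<p_2<\infty$, then $\delta(p_2,\epsilon)<\delta(p_1,\epsilon)$. (2) If $1<p_1<p_2\le 2$, then $\delta(p_1,\epsilon)<\delta(p_2,\epsilon)$.
   Context: For $1<p<\infty$ and $0<\epsilon\le2$: if $1<p\le2$, $\delta(p,\epsilon)$ is the unique $\delta\in[0,1]$ with $(1-\delta+\frac{\epsilon}{2})^p+|1-\delta-\frac{\epsilon}{2}|^p=2$; if $p\ge2$, $\delta(p,\epsilon)=1-\left(1-(\frac{\epsilon}{2})^p\right)^{1/p}$. *)

(* Defs.v *)
From HB Require Import structures.
From mathcomp Require Import all_boot all_order all_algebra.
From mathcomp Require Import all_classical all_reals all_analysis.
Set Implicit Arguments. Unset Strict Implicit. Unset Printing Implicit Defensive.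
Import Order.TTheory GRing.Theory Num.Theory.
Local Open Scope classical_set_scope.
Local Open Scope ring_scope.

Definition delta_eq (R : realType) (p eps d : R) : Prop :=
  0 <= d <= 1 /\ (1 - d + eps / 2) `^ p + `|1 - d - eps / 2| `^ p = 2.

Definition delta (R : realType) (p eps : R) : R :=
  if p <= 2 then xget 0 [set d | delta_eq p eps d]
  else 1 - (1 - (eps / 2) `^ p) `^ (p^-1).

(* Main.v *)
Require Import Defs.
From HB Require Import structures.
From mathcomp Require Import all_boot all_order all_algebra.
From mathcomp Require Import all_classical all_reals all_analysis.
From mathcomp Require Import lra.
Import Order.TTheory GRing.Theory Num.Theory numFieldNormedType.Exports.
Local Open Scope classical_set_scope.
Local Open Scope ring_scope.
Lemma cont_abs_powR (R : realType) (p : R) : 0 < p -> continuous (fun x : R => `|x| `^ p).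
Proof.
move=> p0 x.
have [->|x0] := eqVneq x 0.
  apply/cvgrPdist_le => /= e e0.
  have e1 : 0 < e `^ p^-1 by apply: powR_gt0.
  near=> t.
  rewrite normr0 powR0 ?gt_eqF// sub0r normrN ger0_norm ?powR_ge0//.
  have h : `|t| <= e `^ p^-1.
    near: t; exists (e `^ p^-1) => // y /=; by rewrite sub0r normrN => /ltW.
  have -> : e = (e `^ p^-1) `^ p by rewrite -powRrM mulVf ?gt_eqF// powRr1 // ltW.
  by apply: (ge0_ler_powR (ltW p0)) => //; rewrite ?nnegrE ?ltW.
have hn : {for x, continuous (Num.norm : R -> R)} by exact: norm_continuous.
have hg : {for `|x|, continuous (@powR R ^~ p)}.
  apply: differentiable_continuous; apply/derivable1_diffP.
  have : 0 < `|x| by rewrite normr_gt0.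
  move=> /(is_derive1_powR p) D; exact: ex_derive.
exact: (continuous_comp hn hg).
Unshelve. all: by end_near. Qed.


Lemma cont_f (R : realType) (p e : R) : 0 < p ->
  continuous (fun t : R => `|t + e| `^ p + `|t - e| `^ p).
Proof.
  move=> p0 t.
  have hn1 : {for t, continuous (fun s : R => s + e)}.
    by apply: cvgD; [exact: cvg_id | exact: cvg_cst].
  have hn2 : {for t, continuous (fun s : R => s - e)}.
    by apply: cvgD; [exact: cvg_id | exact: cvg_cst].
  have hA : {for t, continuous (fun s : R => `|s + e| `^ p)}.
    exact: (continuous_comp hn1 (@cont_abs_powR R p p0 _)).
  have hB : {for t, continuous (fun s : R => `|s - e| `^ p)}.
    exact: (continuous_comp hn2 (@cont_abs_powR R p p0 _)).
  exact: (cvgD hA hB).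
Qed.


Lemma tangent_strict (R : realType) (p a x : R) : 1 < p -> 0 < a -> 0 <= x -> x != a ->
  a `^ p + p * a `^ (p - 1) * (x - a) < x `^ p.
Proof.
move=> p1 a0 x0 xa.
set c := p * a `^ (p - 1).
pose k := fun y : R => y `^ p - c * y.
suff : k a < k x by rewrite /k; lra.
have dk (y : R) : 0 < y -> is_derive y 1 k (p * y `^ (p - 1) - c).
  move=> y0; rewrite /k.
  have -> : (fun y1 : R => y1 `^ p - c * y1) = (@powR R ^~ p) - (c *: (@id R)).
    by apply/funext => z /=; rewrite /GRing.scale /=.
  apply: is_deriveB; first exact: is_derive1_powR.
  rewrite -[X in is_derive _ _ _ X]mulr1; exact: is_deriveZ.
have hd (z : R) : 0 < z -> derivable k z 1.
  by move=> z0; have D := dk z z0; exact: ex_derive.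
have hv (z : R) : 0 < z -> derive1 k z = p * z `^ (p - 1) - c.
  by move=> z0; have D := dk z z0; rewrite derive1E; exact: derive_val.
have p0 : 0 < p - 1 by rewrite subr_gt0.
have [xa'|xa'|xa'] := ltgtP x a; last by rewrite xa' eqxx in xa.
- have [->|x0'] := eqVneq x 0.
    rewrite /k powR0 ?gt_eqF ?(lt_trans _ p1)// mulr0 subr0 /c -mulrA [_ `^ _ * a]mulrC mulr_powRB1 ?ltW ?(lt_trans _ p1)//.
    have : 0 < a `^ p by apply: powR_gt0.
    nra.
  have x0'' : 0 < x by rewrite lt_neqAle eq_sym x0' x0.
  apply: (@ltr0_derive1_lt_cc _ k x a).
  + move=> z; rewrite in_itv /= => /andP[xz _]; apply: hd; exact: lt_trans xz.
  + move=> z; rewrite in_itv /= => /andP[xz za]; have z0 : 0 < z by exact: lt_trans xz.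
    rewrite hv // subr_lt0 /c ltr_pM2l ?(lt_trans _ p1)//.
    by apply: gt0_ltr_powR => //; rewrite nnegrE ltW.
  + apply: derivable_within_continuous => z; rewrite in_itv /= => /andP[xz _].
    apply: hd; exact: lt_le_trans xz.
  + by rewrite in_itv /= lexx ltW.
  + by rewrite in_itv /= lexx ltW.
  + exact: xa'.
- apply: (@gtr0_derive1_lt_cc _ k a x).
  + move=> z; rewrite in_itv /= => /andP[az _]; apply: hd; exact: lt_trans az.
  + move=> z; rewrite in_itv /= => /andP[az _]; have z0 : 0 < z by exact: lt_trans az.
    rewrite hv // subr_gt0 /c ltr_pM2l ?(lt_trans _ p1)//.
    by apply: gt0_ltr_powR => //; rewrite nnegrE ltW.
  + apply: derivable_within_continuous => z; rewrite in_itv /= => /andP[az _].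
    apply: hd; exact: lt_le_trans az.
  + by rewrite in_itv /= lexx ltW.
  + by rewrite in_itv /= lexx ltW.
  + exact: xa'.
Qed.

Lemma powR_lt_self (R : realType) (x r : R) : 0 < x < 1 -> 1 < r -> x `^ r < x.
Proof.
move=> /andP[x0 x1] r1.
have l0 : ln x < 0 by apply: ln_lt0; rewrite x0 x1.
rewrite /powR gt_eqF // -{2}(lnK (x:=x)) ?posrE// ltr_expR; nra.
Qed.
Lemma tangent_le (R : realType) (p a x : R) : 1 < p -> 0 < a -> 0 <= x ->
  a `^ p + p * a `^ (p - 1) * (x - a) <= x `^ p.
Proof.
move=> p1 a0 x0; have [->|xa] := eqVneq x a; first by rewrite subrr mulr0 addr0.
exact/ltW/tangent_strict.
Qed.

Lemma pm_aux1 (R : realType) (X Y : R) : X + Y = 2 -> X - 1 + (Y - 1) = 0.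
Proof. by move=> h; lra. Qed.

Lemma pm_aux2 (R : realType) (A B Ar Br r : R) : 1 + r * 1 * (A - 1) < Ar ->
  1 + r * 1 * (B - 1) < Br -> r * 1 * (A - 1) + r * 1 * (B - 1) = 0 -> 2 < Ar + Br.
Proof. by move=> *; lra. Qed.

Lemma power_mean (R : realType) (p q u v : R) : 1 < p -> p < q -> 0 <= u -> 0 <= v ->
  u != v -> u `^ p + v `^ p = 2 -> 2 < u `^ q + v `^ q.
Proof.
move=> p1 pq u0 v0 uv h.
have p0 : 0 < p by apply: lt_trans p1.
set A := u `^ p in h *; set B := v `^ p in h *.
have AB : A != B.
  apply/negP => /eqP AB; move/negP: uv; apply; apply/eqP.
  by apply: (powR_injective p0) => //; rewrite nnegrE.
have A1 : A != 1 by apply: contra AB => /eqP A1; apply/eqP; lra.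
have B1 : B != 1 by apply: contra AB => /eqP B1; apply/eqP; lra.
set r := q / p.
have r1 : 1 < r by rewrite /r ltr_pdivlMr // mul1r.
have eu : forall w : R, w `^ q = (w `^ p) `^ r.
  by move=> w; rewrite -powRrM /r mulrC divfK // gt_eqF.
rewrite !eu -/A -/B.
have hA := @tangent_strict R _ _ _ r1 ltr01 (powR_ge0 u p) A1.
have hB := @tangent_strict R _ _ _ r1 ltr01 (powR_ge0 v p) B1.
rewrite !powR1 /= in hA hB.
have : r * 1 * (A - 1) + r * 1 * (B - 1) = 0.
  rewrite -mulrDr.
  by rewrite pm_aux1 // mulr0.
move: hA hB; rewrite -/A -/B; exact: pm_aux2.
Qed.

Lemma g_incr (R : realType) (e p q : R) : 0 < e < 1 -> 0 < p -> p < q ->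
  (1 - e `^ p) `^ p^-1 < (1 - e `^ q) `^ q^-1.
Proof.
move=> /andP[e0 e1] p0 pq.
have q0 : 0 < q := lt_trans p0 pq.
set a := e `^ p.
have a0 : 0 < a by apply: powR_gt0.
have a1 : a < 1.
  have := gt0_ltr_powR p0 (ltW e0) ler01 e1. by rewrite powR1.
set r := q / p.
have r1 : 1 < r by rewrite /r ltr_pdivlMr // mul1r.
have r0 : 0 < r by apply: lt_trans r1.
have eq : e `^ q = a `^ r by rewrite /a -powRrM /r mulrC divfK // gt_eqF.
have hq : q^-1 = r^-1 * p^-1 by rewrite /r invf_div mulrAC divff ?mul1r // gt_eqF.
rewrite eq hq powRrM.
apply: gt0_ltr_powR; first by rewrite invr_gt0.
- by rewrite nnegrE subr_ge0 ltW.
- by rewrite nnegrE powR_ge0.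
have h1 := @powR_lt_self R (1 - a) r.
have h2 := @powR_lt_self R a r.
have : 0 < 1 - a < 1 by apply/andP; split; lra.
move=> /h1 /(_ r1) H1.
have : 0 < a < 1 by rewrite a0 a1.
move=> /h2 /(_ r1) H2.
have -> : 1 - a = ((1 - a) `^ r) `^ (r^-1).
  by rewrite -powRrM mulfV ?gt_eqF // powRr1 // subr_ge0 ltW.
apply: gt0_ltr_powR; first by rewrite invr_gt0.
- by rewrite nnegrE powR_ge0.
- by rewrite nnegrE subr_ge0; apply: ltW; apply: (lt_trans H2).
lra.
Qed.
Lemma F_mono (R : realType) (p e t1 t2 : R) : 1 < p -> 0 < e -> 0 <= t1 -> t1 <= t2 ->
  (t1 + e) `^ p + `|t1 - e| `^ p <= (t2 + e) `^ p + `|t2 - e| `^ p.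
Proof.
move=> p1 e0.
have p0 : 0 < p by apply: lt_trans p1.
have caseA : forall s1 s2 : R, e <= s1 -> s1 <= s2 ->
    (s1 + e) `^ p + `|s1 - e| `^ p <= (s2 + e) `^ p + `|s2 - e| `^ p.
  move=> s1 s2 es1 s12.
  rewrite !ger0_norm ?subr_ge0 //; last exact: le_trans s12.
  apply: lerD; apply: (ge0_ler_powR (ltW p0)); rewrite ?nnegrE; lra.
have caseB : forall s1 s2 : R, 0 <= s1 -> s1 <= s2 -> s2 <= e ->
    (s1 + e) `^ p + `|s1 - e| `^ p <= (s2 + e) `^ p + `|s2 - e| `^ p.
  move=> s1 s2 s10 s12 s2e.
  rewrite !ler0_norm ?subr_le0 //; last exact: le_trans s2e.
  rewrite !opprB.
  have [->|s12'] := eqVneq s1 s2; first exact: lexx.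
  have s12s : s1 < s2 by rewrite lt_neqAle s12' s12.
  have ha := @tangent_le R p (e - s1) (e - s2) p1 ltac:(lra) ltac:(lra).
  have hb := @tangent_le R p (s1 + e) (s2 + e) p1 ltac:(lra) ltac:(lra).
  have hab : (e - s1) `^ (p - 1) <= (s1 + e) `^ (p - 1).
    apply: (ge0_ler_powR _); rewrite ?nnegrE; lra.
  have hm : 0 <= p * (s2 - s1) * ((s1 + e) `^ (p - 1) - (e - s1) `^ (p - 1)).
    apply: mulr_ge0; [apply: mulr_ge0; lra | lra].
  lra.
move=> t10 t12.
have [t2e|t2e] := leP t2 e; first exact: caseB.
have [et1|et1] := leP e t1; first exact: caseA.
apply: (le_trans (caseB t1 e t10 (ltW et1) (lexx e))).
exact: caseA (lexx e) (ltW t2e).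
Qed.
Lemma exists_sol (R : realType) (p eps : R) : 1 < p -> 0 < eps < 2 ->
  exists d, delta_eq p eps d.
Proof.
move=> p1 /andP[eps0 eps2].
have p0 : 0 < p by apply: lt_trans p1.
set e := eps / 2.
have e0 : 0 < e by rewrite /e; lra.
have e1 : e < 1 by rewrite /e; lra.
pose f := fun t : R => `|t + e| `^ p + `|t - e| `^ p.
have cf := @cont_f R p e p0.
have f0 : f 0 < 2.
  rewrite /f add0r sub0r normrN gtr0_norm //.
  have := gt0_ltr_powR p0 (ltW e0) ler01 e1; rewrite powR1 /=; lra.
have f1 : 2 < f 1.
  rewrite /f !ger0_norm; [|lra|lra].
  have ha := @tangent_strict R p 1 (1 + e) p1 ltr01 ltac:(lra) ltac:(apply/eqP; lra).
  have hb := @tangent_strict R p 1 (1 - e) p1 ltr01 ltac:(lra) ltac:(apply/eqP; lra).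
  rewrite !powR1 /= in ha hb; lra.
have [c /andP[c0 c1] fc] : exists2 c, c \in `[0, 1]%R & f c = 2.
  apply: IVT => //; first exact: continuous_subspaceT.
  by rewrite ge_min le_max (ltW f0) (ltW f1) orbT.
rewrite bnd_simp in c0 c1.
have {c0}c0 : (0:R) <= c by exact: c0.
have {c1}c1 : c <= (1:R) by exact: c1.
exists (1 - c); split; first by apply/andP; split; lra.
have -> : 1 - (1 - c) + eps / 2 = `|c + e| by rewrite ger0_norm /e; lra.
have -> : 1 - (1 - c) - eps / 2 = c - e by rewrite /e; lra.
exact: fc.
Qed.

Lemma delta2 (R : realType) (eps : R) : 0 < eps < 2 ->
  delta 2 eps = 1 - (1 - (eps / 2) `^ 2) `^ (2^-1).
Proof.
move=> he; have /andP[eps0 eps2] := he.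
rewrite /delta lexx.
have := xgetPex 0 (@exists_sol R 2 eps ltac:(lra) he).
set d := xget _ _; move=> [/andP[d0 d1] h].
set e := eps / 2 in h *.
set c := 1 - d in h *.
have c0 : 0 <= c by rewrite /c; lra.
have e0 : 0 <= e by rewrite /e; lra.
have P2 : forall x : R, 0 <= x -> x `^ 2 = x ^+ 2 by move=> x x0; rewrite -powR_mulrn.
rewrite !P2 // in h; last exact: addr_ge0.
rewrite real_normK ?num_real // in h.
have hc : 1 - e ^+ 2 = c ^+ 2 by nra.
rewrite P2 // hc -P2 // -powRrM mulfV ?powRr1 //.
by rewrite /c; lra.
Qed.

Lemma aux_twice (R : realType) (x : R) : x + x = 2 -> x < 1 -> False.
Proof. by move=> *; lra. Qed.

Lemma aux_norm (R : realType) (t e : R) : 0 < t -> 0 < e -> `|t - e| < t + e.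
Proof. by move=> *; rewrite ltr_norml; apply/andP; split; lra. Qed.

Theorem proposition3p15 (R : realType) (eps : R) :
  0 < eps < 2 ->
  (forall p1 p2 : R, 2 <= p1 -> p1 < p2 -> delta p2 eps < delta p1 eps) /\
  (forall p1 p2 : R, 1 < p1 -> p1 < p2 -> p2 <= 2 -> delta p1 eps < delta p2 eps).
Proof.
move=> he; have /andP[eps0 eps2] := he.
have ee : 0 < eps / 2 < 1.
  by apply/andP; split; [apply: divr_gt0 | rewrite ltr_pdivrMr // mul1r].
split.
- move=> p1 p2 p12 p12'.
  have hp2 : delta p2 eps = 1 - (1 - (eps / 2) `^ p2) `^ (p2^-1).
    have hf : (p2 <= 2) = false.
      by apply/negbTE; rewrite -ltNge; exact: le_lt_trans p12 p12'.
    by rewrite /delta hf; reflexivity.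
  have hp1 : delta p1 eps = 1 - (1 - (eps / 2) `^ p1) `^ (p1^-1).
    have [->|p1'] := eqVneq p1 2; first exact: delta2.
    have hf : (p1 <= 2) = false.
      by apply/negbTE; rewrite -ltNge lt_neqAle eq_sym p1' p12.
    by rewrite /delta hf; reflexivity.
  rewrite hp1 hp2.
  have p10 : 0 < p1 by apply: lt_le_trans p12.
  have := @g_incr R (eps / 2) p1 p2 ee p10 p12'.
  by rewrite ltrD2l ltrN2.
- move=> p1 p2 p11 p12 p22.
  have h12 : p1 <= 2 by exact: le_trans (ltW p12) p22.
  rewrite /delta p22 h12.
  have p21 : 1 < p2 by exact: lt_trans p11 p12.
  have := xgetPex 0 (@exists_sol R p1 eps p11 he).
  have := xgetPex 0 (@exists_sol R p2 eps p21 he).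
  set d2 := xget 0 [set d | delta_eq p2 eps d].
  set d1 := xget 0 [set d | delta_eq p1 eps d].
  move=> [/andP[d20 d21] h2] [/andP[d10 d11] h1].
  clearbody d1 d2.
  rewrite ltNge; apply/negP => hle.
  set e := eps / 2 in h1 h2 ee.
  clearbody e.
  have /andP[e0 e1] := ee.
  have hm := @F_mono R p2 e (1 - d1) (1 - d2) p21 e0 ltac:(by rewrite subr_ge0)
    ltac:(by rewrite lerD2l lerN2).
  rewrite h2 in hm.
  have t0' : 0 < 1 - d1.
    rewrite lt_neqAle subr_ge0 d11 andbT eq_sym; apply/negP => /eqP t0.
    move: h1; rewrite t0 add0r sub0r normrN gtr0_norm // => h1.
    apply: (@aux_twice R _ h1).
    by have := gt0_ltr_powR (lt_trans ltr01 p11) (ltW e0) ler01 e1; rewrite powR1.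
  have hv := @aux_norm R _ _ t0' e0.
  have := @power_mean R p1 p2 (1 - d1 + e) `|1 - d1 - e| p11 p12
    ltac:(by rewrite addr_ge0 // ltW) (normr_ge0 _) ltac:(by rewrite gt_eqF) h1.
  by rewrite ltNge hm.
Qed.
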